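(* Let $\Gamma_1,\Gamma_2$ be finite abelian groups with $|\Gamma_1|=2a+1$ and $|\Gamma_2|=2b+1$. Suppose that $2a+1$ divides $2b+1$ and that there exists a $\mathrm{M}^0_{\Gamma_2^*}(2,b;b,2)$. Then there exists a $\mathrm{M}^0_{\Gamma^*}(2,a+b+2ab;\,a+b+2ab,2)$, where $\Gamma=\Gamma_1\oplus\Gamma_2$.
   Context: For an abelian group $\Gamma$ and $\Omega\subseteq\Gamma$, a zero-sum magic partially filled array $\mathrm{M}^0_\Omega(m,n;s,k)$ is an $m\times n$ array, some cells of which may be empty, with entries in $\Omega$ in which every element of $\Omega$ appears exactly once, each row has exactly $s$ and each column exactly $k$ filled cells, and all row and column sums equal $0_\Gamma$. In particular $\mathrm{M}^0_\Omega(2,n;n,2)$ is a $2\times n$ array with no empty cells. $\Gamma^*=\Gamma\setminus\{0_\Gamma\}$. *)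

(* Defs.v *)
From HB Require Import structures.
From mathcomp Require Import all_boot all_order all_algebra.
Set Implicit Arguments. Unset Strict Implicit. Unset Printing Implicit Defensive.
Import GRing.Theory.
Local Open Scope ring_scope.

(* A (partially filled) m x n array over G: empty cells are [None]. *)
Definition filled (G : Type) (x : option G) : bool := if x is Some _ then true else false.

Definition is_zsmpfa (G : finZmodType) (Omega : {set G}) (m n s k : nat)
    (A : 'M[option G]_(m, n)) : Prop :=
  [/\ [/\ (forall i : 'I_m, #|[set j : 'I_n | filled (A i j)]| = s)%N,
      (forall j : 'I_n, #|[set i : 'I_m | filled (A i j)]| = k)%N,
      (forall i j x, A i j = Some x -> x \in Omega) &
      (forall x, x \in Omega -> #|[set ij : 'I_m * 'I_n | A ij.1 ij.2 == Some x]| = 1)%N],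
      (forall i : 'I_m, \sum_(j < n) odflt 0 (A i j) = 0) &
      (forall j : 'I_n, \sum_(i < m) odflt 0 (A i j) = 0)].

Arguments is_zsmpfa {G} Omega m n s k A.

Definition exists_zsmpfa (G : finZmodType) (Omega : {set G}) (m n s k : nat) : Prop :=
  exists A : 'M[option G]_(m, n), is_zsmpfa Omega m n s k A.

Definition nonzero (G : finZmodType) : {set G} := [set x : G | x != 0].

Definition dsum (G1 G2 : finZmodType) : Type := (G1 * G2)%type.
HB.instance Definition _ (G1 G2 : finZmodType) := Finite.on (dsum G1 G2).
HB.instance Definition _ (G1 G2 : finZmodType) := GRing.Zmodule.on (dsum G1 G2).

(* Main.v *)
From HB Require Import structures.
From mathcomp Require Import all_boot all_order all_algebra zify.
Require Import Defs.
Set Implicit Arguments. Unset Strict Implicit. Unset Printing Implicit Defensive.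
Import GRing.Theory.
Local Open Scope ring_scope.

Lemma mulr_card0 (G : finZmodType) (x : G) : x *+ #|G| = 0.
Proof.
have H : \sum_(y : G) y = \sum_(y : G) (y + x) by apply: reindex_inj; apply: addIr.
move: H; rewrite big_split /= sumr_const.
by move/eqP; rewrite -{1}(addr0 (\sum_i _)) (inj_eq (addrI _)) eq_sym => /eqP.
Qed.

Lemma odd_half (G : finZmodType) (a : nat) (x : G) :
  #|G| = (2 * a + 1)%N -> (x *+ (a.+1)) *+ 2 = x.
Proof.
move=> hG; rewrite -mulrnA.
have -> : (a.+1 * 2 = #|G| + 1)%N by rewrite hG; lia.
by rewrite mulrnDr mulr_card0 add0r.
Qed.

Lemma odd_2inj (G : finZmodType) (a : nat) (x : G) :
  #|G| = (2 * a + 1)%N -> x + x = 0 -> x = 0.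
Proof.
move=> hG hx; rewrite -(odd_half x hG) mulrnAC mulr2n hx mul0rn.
done.
Qed.

Lemma halfset (G : finZmodType) (a : nat) : #|G| = (2 * a + 1)%N ->
  exists T : {set G}, [/\ forall g, g \in T -> - g \notin T,
     forall g, g != 0 -> g \in T \/ - g \in T, 0 \notin T & #|T| = a].
Proof.
move=> hG.
pose T := [set g : G | (g != 0) && (enum_rank g < enum_rank (-g))%N].
have Tneg g : g \in T -> - g \notin T.
  rewrite !inE opprK => /andP [_ h1]; apply/negP => /andP [_ h2].
  by move: (ltn_trans h1 h2); rewrite ltnn.
have Thalf g : g != 0 -> g \in T \/ - g \in T.
  move=> gnz; have ng : - g != g.
    apply: contraNneq gnz => e; apply/eqP; apply: (odd_2inj hG).
    by rewrite -{1}e addNr.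
  have : enum_rank g != enum_rank (-g).
    by apply: contraNneq ng => /enum_rank_inj e; rewrite -e.
  rewrite !inE oppr_eq0 gnz opprK /=.
  case: ltngtP => [h _|h _|h]; [by left|by right|].
  by move/val_inj: h => ->; rewrite eqxx.
have T0 : 0 \notin T by rewrite inE eqxx.
clearbody T; exists T; split => //.
have cU : #|[set g : G | - g \in T]| = #|T| := card_preimset _ (@oppr_inj _).
have eT : [set: G] = 0 |: (T :|: [set g : G | - g \in T]).
  apply/setP => g; case: (eqVneq g 0) => [->|/Thalf [] h]; rewrite !inE ?eqxx //;
  by rewrite h ?orbT.
have n0 : 0 \notin T :|: [set g : G | - g \in T] by rewrite !inE oppr0 (negbTE T0).
have I0 : T :&: [set g : G | - g \in T] = set0.
  apply/setP => g; rewrite !inE; apply/negbTE; apply/negP => /andP [/Tneg h1 h2].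
  by rewrite h2 in h1.
have := cardsUI T [set g : G | - g \in T]; rewrite I0 cards0 addn0 cU => e.
move: (cardsT G); rewrite eT cardsU1 n0 e hG; lia.
Qed.


Lemma construct (G : finZmodType) (I : finType) (f : I -> G) :
  injective f -> (forall i j, f i + f j != 0) -> \sum_i f i = 0 ->
  (forall x : G, x != 0 -> exists i, x = f i \/ x = - f i) ->
  exists_zsmpfa (nonzero G) 2 #|I| #|I| 2.
Proof.
move=> finj fneg fsum fcov.
have fnz i : f i != 0.
  by apply: contraNneq (fneg i i) => ->; rewrite addr0.
pose A := \matrix_(r < 2, j < #|I|)
   Some (if r == ord0 then f (enum_val j) else - f (enum_val j)).
have rowsum : \sum_(j < #|I|) f (enum_val j) = 0.
  rewrite -[RHS]fsum (reindex (fun j : 'I_#|I| => enum_val j)) //.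
  apply: onW_bij; exact: enum_val_bij.
exists A; split; first split.
- move=> r; have -> : [set j | filled (A r j)] = setT by apply/setP=> j; rewrite !inE mxE.
  by rewrite cardsT card_ord.
- move=> j; have -> : [set r | filled (A r j)] = setT by apply/setP=> r; rewrite !inE mxE.
  by rewrite cardsT card_ord.
- move=> r j x; rewrite mxE => -[<-]; rewrite inE; case: ifP => _ //.
  by rewrite oppr_eq0.
- move=> x; rewrite inE => /fcov [i hi].
  apply/eqP/cards1P.
  exists (if x == f i then ord0 else ord_max, enum_rank i).
  apply/setP => -[r j]; rewrite !inE mxE /= xpair_eqE.
  have ev : forall k, (enum_val j == k) = (j == enum_rank k).
    by move=> k; apply/eqP/eqP => [<-|->]; rewrite ?enum_valK ?enum_rankK.
  have nn : (- f i == f i) = false.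
    apply/negbTE; apply: contraNneq (fneg i i) => h.
    by rewrite -{1}h addNr.
  case: r => [[|[|//]] hr] /=.
  - case: hi => ->; rewrite ?eqxx ?nn /=.
      by rewrite (inj_eq (@Some_inj _)) (inj_eq finj) ev.
    rewrite (inj_eq (@Some_inj _)); apply/negbTE.
    by apply: contraNneq (fneg (enum_val j) i) => ->; rewrite addNr.
  - case: hi => ->; rewrite ?eqxx ?nn /=.
      rewrite (inj_eq (@Some_inj _)); apply/negbTE.
      by apply: contraNneq (fneg i (enum_val j)) => <-; rewrite addNr.
    by rewrite (inj_eq (@Some_inj _)) (inj_eq (@oppr_inj _)) (inj_eq finj) ev.
- move=> r; case: r => [[|[|//]] hr] /=.
    by under eq_bigr do rewrite mxE /=.
  under eq_bigr do rewrite mxE /=.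
  by rewrite sumrN rowsum oppr0.
- move=> j; rewrite !big_ord_recl big_ord0 !mxE /=.
  by rewrite addr0 subrr.
Qed.


Lemma extract (G : finZmodType) n (A : 'M[option G]_(2,n)) :
  is_zsmpfa (nonzero G) 2 n n 2 A ->
  exists f : 'I_n -> G,
  [/\ injective f, forall i j, f i + f j != 0, \sum_j f j = 0 &
      forall x, x != 0 -> exists i, x = f i \/ x = - f i].
Proof.
move=> [[rc cc inO uq] rs cs].
pose f := fun j => odflt 0 (A ord0 j); exists f.
have fil r j : A r j = Some (odflt 0 (A r j)).
  case E: (A r j) => [y|] //; exfalso.
  have : [set r' | filled (A r' j)] \subset [set~ r].
    apply/subsetP => r'; rewrite !inE; apply: contraTneq => ->; by rewrite E.
  by move/subset_leq_card; rewrite cc cardsC1 card_ord.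
have I2 (r : 'I_2) : r = ord0 \/ r = ord_max.
  case: r => [[|[|//]] hr]; [left|right]; exact: val_inj.
have om : (ord_max : 'I_2) != ord0 by [].
have A0 j : A ord0 j = Some (f j) by rewrite /f -fil.
have A1 j : A ord_max j = Some (- f j).
  rewrite fil; congr Some; apply: (addrI (f j)); rewrite subrr.
  have := cs j; rewrite !big_ord_recl big_ord0 addr0 /=.
  have -> : lift ord0 ord0 = ord_max :> 'I_2 by apply: val_inj.
  by [].
have uq2 x p q : A p.1 p.2 = Some x -> A q.1 q.2 = Some x -> p = q.
  move=> hp hq; have xO : x \in nonzero G by apply: (inO p.1 p.2).
  move: (uq x xO) => /eqP /cards1P [c hc].
  have : p \in [set ij | A ij.1 ij.2 == Some x] by rewrite inE hp.
  have : q \in [set ij | A ij.1 ij.2 == Some x] by rewrite inE hq.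
  by rewrite hc !inE => /eqP -> /eqP ->.
split.
- move=> i j hij; have := uq2 (f i) (ord0, i) (ord0, j) (A0 i).
  by rewrite /= A0 hij => /(_ erefl) [].
- move=> i j; apply/negP => /eqP h.
  have h' : - f j = f i by apply: (addIr (f j)); rewrite addNr h.
  have := uq2 (f i) (ord0, i) (ord_max, j) (A0 i).
  by rewrite /= A1 h' => /(_ erefl) [].
- by move: (rs ord0).
- move=> x hx; have xO : x \in nonzero G by rewrite inE.
  move: (uq x xO) => /eqP /cards1P [c hc].
  have : c \in [set ij | A ij.1 ij.2 == Some x] by rewrite hc inE.
  rewrite inE => /eqP; case: (I2 c.1) => ->.
    by rewrite A0 => -[<-]; exists c.2; left.
  by rewrite A1 => -[<-]; exists c.2; right.
Qed.


Lemma sum_if (G : finType) (H : zmodType) (x : G) (u : G -> H) :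
  \sum_(g : G) (if g == x then u g else - u g) = u x *+ 2 + \sum_(g : G) - u g.
Proof.
rewrite (bigD1 x) //= eqxx [X in _ = _ + X](bigD1 x) //=.
rewrite (eq_bigr (fun g => - u g)); last by move=> g /negbTE ->.
by rewrite mulr2n addrA addrK.
Qed.

Lemma dsumN (G1 G2 : finZmodType) (x : G1) (y : G2) : - ((x, y) : dsum G1 G2) = (- x, - y).
Proof. by []. Qed.
Lemma dsumD (G1 G2 : finZmodType) (x x' : G1) (y y' : G2) : ((x, y) : dsum G1 G2) + (x', y') = (x + x', y + y').
Proof. by []. Qed.
Lemma dsum0 (G1 G2 : finZmodType) : (0 : dsum G1 G2) = (0, 0).
Proof. by []. Qed.

Theorem mainTheorem16 (G1 G2 : finZmodType) (a b : nat) :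
  #|G1| = (2 * a + 1)%N ->
  #|G2| = (2 * b + 1)%N ->
  (2 * a + 1 %| 2 * b + 1)%N ->
  exists_zsmpfa (nonzero G2) 2 b b 2 ->
  exists_zsmpfa (nonzero (dsum G1 G2)) 2 (a + b + 2 * a * b) (a + b + 2 * a * b) 2.
Proof.
move=> h1 h2 hdiv [A2 /extract [h [hinj hneg hsum hcov]]].
have [T [Tneg Thalf T0 Tc]] := halfset h1.
have hnz j : h j != 0 by apply: contraNneq (hneg j j) => ->; rewrite addr0.
pose I : finType := ('I_b * G1 + {g : G1 | g \in T})%type.
pose tau := \sum_(t : {g : G1 | g \in T}) val t.
pose nu := \sum_(g : G1) - g.
pose c := - (nu *+ b + tau).
pose x0 := c *+ a.+1.
pose xj := fun j : 'I_b => if (j == 0 :> nat) then x0 else 0.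
pose F := fun i : I => match i with
  | inl p => if p.2 == xj p.1 then ((p.2, h p.1) : dsum G1 G2) else (- p.2, - h p.1)
  | inr t => (val t, 0) end.
have cI : #|I| = (a + b + 2 * a * b)%N.
  rewrite card_sum card_prod card_ord card_sig h1.
  have -> : #|[pred x | x \in T]| = #|T| by apply: eq_card.
  rewrite Tc; lia.
rewrite -cI; apply: (@construct _ I F).
- move=> [[j g]|t] [[j' g']|t'] /=.
  + case: ifP => e1; case: ifP => e2 => -[E1 E2].
    * by move/hinj: E2 => <-; rewrite E1.
    * by move: (hneg j j'); rewrite E2 addNr eqxx.
    * by move: (hneg j j'); rewrite -E2 subrr eqxx.
    * by move/oppr_inj: E1 => <-; move/oppr_inj/hinj: E2 => <-.
  + case: ifP => _ -[_ E].
      by move: (hnz j); rewrite E eqxx.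
    by move: (hnz j); rewrite -oppr_eq0 E eqxx.
  + case: ifP => _ -[_ E].
      by move: (hnz j'); rewrite -E eqxx.
    by move: (hnz j'); rewrite -oppr_eq0 -E eqxx.
  + by move=> -[E]; congr inr; apply: val_inj.
- move=> [[j g]|t] [[j' g']|t'] /=.
  + case: ifP => e1; case: ifP => e2; rewrite dsumD dsum0; apply/eqP => -[E1 E2].
    * by move/eqP: E2; rewrite (negbTE (hneg j j')).
    * move/subr0_eq/hinj: E2 => ejj; move/subr0_eq: E1 => egg; subst.
      by rewrite e1 in e2.
    * rewrite addrC in E1; rewrite addrC in E2.
      move/subr0_eq/hinj: E2 => ejj; move/subr0_eq: E1 => egg; subst.
      by rewrite e1 in e2.
    * by move/eqP: E2; rewrite -opprD oppr_eq0 (negbTE (hneg j j')).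
  + case: ifP => e1; rewrite dsumD dsum0; apply/eqP => -[E1 E2].
      by move: (hnz j); rewrite -E2 addr0 eqxx.
    by move: (hnz j); rewrite -oppr_eq0 -E2 addr0 eqxx.
  + case: ifP => e1; rewrite dsumD dsum0; apply/eqP => -[E1 E2].
      by move: (hnz j'); rewrite -E2 add0r eqxx.
    by move: (hnz j'); rewrite -oppr_eq0 -E2 add0r eqxx.
  + rewrite dsumD dsum0; apply/eqP => -[E1 E2].
    have e : val t' = - val t by apply: (addrI (val t)); rewrite E1 subrr.
    by move: (Tneg _ (valP t)); rewrite -e (valP t').
- have sp : forall (K : finType) (P : K -> dsum G1 G2),
      \sum_k P k = (\sum_k (P k).1, \sum_k (P k).2).
    move=> K P; apply: (big_rec3 (fun x y z => x = (y, z))) => // k u v w _ ->.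
    by case: (P k).
  rewrite sp dsum0; congr (_, _).
  + rewrite big_sumType /=.
    rewrite (eq_bigr (fun p => if p.2 == xj p.1 then p.2 else - p.2)); last first.
      by move=> p _; rewrite /F; case: ifP.
    rewrite -(pair_bigA _ (fun j g => if g == xj j then g else - g)) /=.
    rewrite (eq_bigr (fun j => xj j *+ 2 + nu)); last first.
      by move=> j _; exact: (sum_if (xj j) (fun g : G1 => g)).
    rewrite big_split /= sumrMnl sumr_const card_ord.
    case: (posnP b) => [b0|bpos].
      subst b; rewrite big_ord0 mul0rn add0r mulr0n add0r.
      have a0 : a = 0%N by move: hdiv; rewrite dvdn1; lia.
      have e1 : #|G1| = 1%N by rewrite h1 a0.
      apply: big1 => t _; rewrite -[LHS]mulr1n.
      by rewrite -e1 mulr_card0.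
    rewrite (bigD1 (Ordinal bpos)) //= big1; last first.
      by move=> j; rewrite /xj -val_eqE /= => /negbTE ->.
    rewrite addr0 /xj /= (odd_half c h1) /c.
    by rewrite -addrA addNr.
    rewrite big_sumType /= [X in _ + X]big1 // addr0.
    rewrite (eq_bigr (fun p => if p.2 == xj p.1 then h p.1 else - h p.1)); last first.
      by move=> p _; rewrite /F; case: ifP.
    rewrite -(pair_bigA _ (fun j g => if g == xj j then h j else - h j)) /=.
    rewrite (eq_bigr (fun j => h j *+ 2 + (- h j) *+ #|G1|)); last first.
      move=> j _; rewrite (sum_if (xj j) (fun _ : G1 => h j)).
      by rewrite sumr_const.
    by rewrite big_split /= !sumrMnl sumrN hsum oppr0 !mul0rn addr0.
- move=> [x y]; case: (eqVneq y 0) => [->|ynz] xy.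
    have xnz : x != 0 by apply: contraNneq xy => ->.
    case: (Thalf x xnz) => xT.
      by exists (inr (exist _ x xT)); left.
    by exists (inr (exist _ (- x) xT)); right; rewrite /= dsumN opprK oppr0.
  have [j [->|->]] := hcov y ynz.
    case: (eqVneq x (xj j)) => ex.
      by exists (inl (j, x)); left; rewrite /= ex eqxx.
    by exists (inl (j, x)); right; rewrite /= (negbTE ex) dsumN !opprK.
  case: (eqVneq (- x) (xj j)) => ex.
    by exists (inl (j, - x)); right; rewrite /= ex eqxx dsumN -ex !opprK.
  by exists (inl (j, - x)); left; rewrite /= (negbTE ex) !opprK.

Qed.
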